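(* Let $G$ be a finite group acting on a finite set $\mathsf X$, and let $L:G\times G\times\mathsf X\to\mathbb{C}^\times$, $(g,h,x)\mapsto L^x_{g,h}$, and $\omega:G^3\to\mathbb{C}^\times$ satisfy $$L^x_{g,hk}\,L^x_{h,k}=\omega(g,h,k)\,L^{kx}_{g,h}\,L^x_{gh,k}\qquad\text{for all }g,h,k\in G,\ x\in\mathsf X.$$ Then the following are equivalent: (1) there is a gauge transformation $(\beta,\gamma)$ such that the transformed symbols satisfy $L'^x_{g,h}=1$ for all $g,h,x$; (2) there is a gauge transformation such that $L'^x_{a,b}=L'^y_{a,b}$ for all $a,b\in G$, $x,y\in\mathsf X$; (3) there is a gauge transformation such that $\ell'^x_{a,b;g}=1$ for all $a,b,g\in G$, $x\in\mathsf X$; (4) $L$ is block independent, i.e. there is a gauge transformation such that $\ell'^x_{a,b;g}=\ell'^y_{a,b;g}$ for all $a,b,g\in G$, $x,y\in\mathsf X$.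
   Context: A gauge transformation is a pair of functions $\beta:G\times G\to\mathbb{C}^\times$, $\gamma:G\times\mathsf X\to\mathbb{C}^\times$ ($(g,x)\mapsto\gamma^x_g$); it maps $L$ to $L'^x_{g,h}=\dfrac{\beta_{g,h}\,\gamma^x_{gh}}{\gamma^{hx}_{g}\,\gamma^x_h}L^x_{g,h}$. For any such family $L$ define $\ell^x_{a,b;g}=\dfrac{L^x_{ag,\,g^{-1}b}}{L^x_{a,b}}$, and $\ell'$ the same expression built from $L'$. Here $gx$ denotes the action of $g\in G$ on $x\in\mathsf X$. *)

(* Defs.v *)
From mathcomp Require Import all_boot all_algebra all_fingroup.
From mathcomp Require Import complex Rstruct.
Set Implicit Arguments. Unset Strict Implicit. Unset Printing Implicit Defensive.
Import GRing.Theory.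
Local Open Scope ring_scope.

Definition CC : fieldType := complex Rdefinitions.R.

Section Gauge.
Variables (gT : finGroupType) (X : finType) (act : gT -> X -> X).

Definition is_left_action : Prop :=
  (forall x, act 1%g x = x) /\ (forall g h x, act (g * h)%g x = act g (act h x)).

Definition gauge (beta : gT -> gT -> CC) (gamma : gT -> X -> CC)
  (L : gT -> gT -> X -> CC) : gT -> gT -> X -> CC :=
  fun g h x => beta g h * gamma (g * h)%g x / (gamma g (act h x) * gamma h x) * L g h x.

Definition ell (L : gT -> gT -> X -> CC) (a b g : gT) (x : X) : CC :=
  L (a * g)%g (g^-1 * b)%g x / L a b x.

Definition exists_gauge (L : gT -> gT -> X -> CC) (P : (gT -> gT -> X -> CC) -> Prop) : Prop :=
  exists (beta : gT -> gT -> CC) (gamma : gT -> X -> CC),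
    [/\ forall g h, beta g h != 0, forall g x, gamma g x != 0 & P (gauge beta gamma L)].

End Gauge.

(* Main.v *)
Require Import Defs.
From mathcomp Require Import all_boot all_algebra all_fingroup.
From mathcomp Require Import complex Rstruct.
From mathcomp Require Import ring.
Local Open Scope ring_scope.
Import GRing.Theory.

Section S.
Variables (gT : finGroupType) (X : finType) (act : gT -> X -> X).
Hypothesis actH : is_left_action act.

Lemma gauge_nz b c (L : gT -> gT -> X -> CC) : (forall g h, b g h != 0) -> (forall g x, c g x != 0) ->
  (forall g h x, L g h x != 0) -> forall g h x, gauge act b c L g h x != 0.
Proof.
move=> bn cn Ln g h x; rewrite /gauge.
by rewrite !(mulf_neq0, invr_eq0).
Qed.

Lemma gauge_comp b1 c1 b2 c2 (L : gT -> gT -> X -> CC) g h x :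
  (forall g x, c1 g x != 0) -> (forall g x, c2 g x != 0) ->
  gauge act b2 c2 (gauge act b1 c1 L) g h x =
  gauge act (fun g h => b1 g h * b2 g h) (fun g x => c1 g x * c2 g x) L g h x.
Proof.
move=> c1n c2n; rewrite /gauge.
have := c1n (g*h)%g x; have := c1n g (act h x); have := c1n h x.
have := c2n (g*h)%g x; have := c2n g (act h x); have := c2n h x.
move=> *; field; repeat (apply/andP; split); by rewrite ?mulf_neq0.
Qed.

Lemma gauge_coc b c (L : gT -> gT -> X -> CC) omega :
 (forall g h, b g h != 0) -> (forall g x, c g x != 0) -> (forall g h x, L g h x != 0) ->
 (forall g h k x, L g (h * k)%g x * L h k x = omega g h k * L g h (act k x) * L (g * h)%g k x) ->
 forall g h k x, gauge act b c L g (h*k)%g x * gauge act b c L h k x =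
   (omega g h k * b g (h*k)%g * b h k / (b g h * b (g*h)%g k)) * gauge act b c L g h (act k x)
     * gauge act b c L (g*h)%g k x.
Proof.
move=> bn cn Ln coc g h k x.
have E : L g (h*k)%g x = omega g h k * L g h (act k x) * L (g * h)%g k x / L h k x.
  by rewrite -coc mulfK.
rewrite /gauge E actH.2 mulgA.
have := bn g h; have := bn (g*h)%g k; have := Ln h k x.
have := cn (g*h*k)%g x; have := cn g (act h (act k x)); have := cn h (act k x).
have := cn k x; have := cn (g*h)%g (act k x); have := cn (h*k)%g x.
move=> *; field; repeat (apply/andP; split); by rewrite ?mulf_neq0.
Qed.

Lemma main41 (L : gT -> gT -> X -> CC) omega : (forall g h x, L g h x != 0) ->
 (forall g h k x, L g (h * k)%g x * L h k x = omega g h k * L g h (act k x) * L (g * h)%g k x) ->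
 exists_gauge act L (fun L' => forall a b g x y, ell L' a b g x = ell L' a b g y) ->
 exists_gauge act L (fun L' => forall g h x, L' g h x = 1).
Proof.
move=> Ln coc [b1 [c1 [b1n c1n HM]]].
have Mn := @gauge_nz b1 c1 L b1n c1n Ln.
have Mc := @gauge_coc b1 c1 L omega b1n c1n Ln coc.
move: HM Mn Mc.
set M := gauge act b1 c1 L.
set w := fun g h k => omega g h k * b1 g (h*k)%g * b1 h k / (b1 g h * b1 (g*h)%g k).
move=> HM Mn Mc.
pose phi x := M 1%g 1%g x.
have phin : forall x, phi x != 0 by move=> x; apply: Mn.
have P1 : forall g h x, M g h x = ell M 1 (g*h) g x * w 1%g 1%g (g*h)%g * phi (act (g*h) x).
  move=> g h x.
  have A : M 1%g (g*h)%g x = w 1%g 1%g (g*h)%g * phi (act (g*h) x).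
    apply: (@mulIf CC (M 1%g (g*h)%g x) (Mn 1%g (g*h)%g x)).
    by rewrite -{1}[(g*h)%g]mul1g Mc /w !mulg1 !mul1g.
  by rewrite -mulrA -A /ell mul1g mulKg divfK.
have P2 : forall g y, phi y = w g 1%g 1%g * (ell M 1 (g*1) g y * w 1%g 1%g (g*1)%g * phi (act (g*1) y)).
  move=> g y; rewrite -P1.
  apply: (mulIf (Mn g 1%g y)).
  have := Mc g 1%g 1%g y; rewrite /w !mulg1 actH.1 => E.
  by rewrite /w /phi ?mulg1 [LHS]mulrC E.
have Q : forall g h x y, M g h x * phi (act h y) = M g h y * phi (act h x).
  move=> g h x y.
  rewrite (P1 g h x) (P1 g h y) (P2 g (act h x)) (P2 g (act h y)) !mulg1 -!actH.2.
  rewrite (HM 1%g (g*h)%g g x y) (HM 1%g g g (act h x) (act h y)).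
  ring.
pose B2 := fun g h => match [pick x : X] with Some x0 => phi (act h x0) / M g h x0 | None => 1 end.
pose C2 := fun (g : gT) x => phi x.
have B2n : forall g h, B2 g h != 0.
  move=> g h; rewrite /B2; case: pickP => [x0 _|_]; last exact: oner_neq0.
  by rewrite mulf_neq0 ?invr_eq0 ?phin ?Mn.
exists (fun g h => b1 g h * B2 g h), (fun g x => c1 g x * C2 g x).
split.
- by move=> g h; rewrite mulf_neq0.
- by move=> g x; rewrite mulf_neq0.
move=> g h x.
rewrite -(gauge_comp b1 c1 B2 C2 L g h x) // -/M.
rewrite /gauge /B2 /C2; case: pickP => [x0 _|/(_ x) //].
transitivity ((M g h x * phi (act h x0)) / (M g h x0 * phi (act h x))).
  have := phin x; have := phin (act h x); have := Mn g h x0.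
  by move=> *; field; rewrite !phin Mn.
transitivity ((M g h x0 * phi (act h x)) / (M g h x0 * phi (act h x))).
  by congr (_ / _); exact: Q.
by rewrite divff // mulf_neq0.
Qed.

End S.

Theorem mainTheorem7 (gT : finGroupType) (X : finType) (act : gT -> X -> X)
  (L : gT -> gT -> X -> CC) (omega : gT -> gT -> gT -> CC) :
  is_left_action act ->
  (forall g h x, L g h x != 0) ->
  (forall g h k, omega g h k != 0) ->
  (forall g h k x,
     L g (h * k)%g x * L h k x = omega g h k * L g h (act k x) * L (g * h)%g k x) ->
  [<-> exists_gauge act L (fun L' => forall g h x, L' g h x = 1);
       exists_gauge act L (fun L' => forall a b x y, L' a b x = L' a b y);
       exists_gauge act L (fun L' => forall a b g x, ell L' a b g x = 1);
       exists_gauge act L (fun L' => forall a b g x y, ell L' a b g x = ell L' a b g y)].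
Proof.
move=> actH Ln wn coc.
have H41 := @main41 gT X act actH L omega Ln coc.
tfae.
- case=> b [c [bn cn H]]; exists b, c; split=> // a b' x y; by rewrite !H.
- case=> b [c [bn cn H]].
  have [b2 [c2 [bn2 cn2 H2]]] : exists_gauge act L (fun L' => forall g h x, L' g h x = 1).
    apply: H41; exists b, c; split=> // a b' g x y.
    by rewrite /ell (H (a*g)%g (g^-1*b')%g x y) (H a b' x y).
  exists b2, c2; split=> // a b' g x; by rewrite /ell !H2 divr1.
- case=> b [c [bn cn H]]; exists b, c; split=> // a b' g x y; by rewrite !H.
- exact: H41.
Qed.
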